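(* Let $(H,\partial)$ be a right (respectively extended) Cartan–Eilenberg system. The right couple $(A'',E^1)$ converges conditionally to the limit, i.e. $\operatorname{colim}_sH(s,\infty)=0$, if and only if the canonical map $\bar\eta\colon\operatorname{colim}_jH(i,j)\to H(i,\infty)$ is an isomorphism for some $i\in\mathbb{Z}$ (respectively some $i\in\mathbb{Z}\cup\{-\infty\}$); in that case it is an isomorphism for every $i\in\mathbb{Z}$ (respectively every $i\in\mathbb{Z}\cup\{-\infty\}$).
   Context: Let $\mathcal{A}$ be the category of $\mathbb{Z}$-graded $R$-modules. For a linearly ordered set $\mathcal{I}$, an $\mathcal{I}$-system $(H,\partial)$ consists of objects $H(i,j)$ for $i\le j$ in $\mathcal{I}$, functorial morphisms $\eta\colon H(i,j)\to H(i',j')$ (internal degree $0$) for $i\le i'$, $j\le j'$, and natural morphisms $\partial\colon H(j,k)\to H(i,j)$ (internal degree $-1$) for $i\le j\le k$, with $H(i,j)\xrightarrow{\eta}H(i,k)\xrightarrow{\eta}H(j,k)\xrightarrow{\partial}H(i,j)$ exact at each vertex. A right Cartan–Eilenberg system is a $(\mathbb{Z}\cup\{+\infty\})$-system; an extended Cartan–Eilenberg system is a $(\mathbb{Z}\cup\{\pm\infty\})$-system ($\pm\infty$ greatest/least elements). Right couple: $A''_s=H(s,\infty)$, $E^1_s=H(s-1,s)$, $\alpha_s=\eta$, $\beta_s=\partial\colon H(s,\infty)\to H(s-1,s)$, $\gamma_s=\eta\colon H(s-1,s)\to H(s-1,\infty)$. An exact couple converges conditionally to the limit if $\operatorname{colim}_sA_s=0$.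 The colimit $\operatorname{colim}_jH(i,j)$ is over integers $j\to\infty$ along $\eta$, and $\bar\eta$ is induced by $\eta\colon H(i,j)\to H(i,\infty)$. *)

(* Defs.v *)
From HB Require Import structures.
From mathcomp Require Import all_boot all_order all_algebra.
Set Implicit Arguments. Unset Strict Implicit. Unset Printing Implicit Defensive.
Import Order.TTheory GRing.Theory Num.Theory.
Local Open Scope ring_scope.

(* A Z-graded R-module is modelled as a family (M_n)_{n : int} of R-modules;
   a morphism of internal degree d is a family of R-linear maps M_n -> N_{n+d}. *)

Inductive rint : Type := RFin of int | RInf.
Definition rle (a b : rint) : bool :=
  match a, b with
  | RFin x, RFin y => (x <= y)%R
  | _, RInf => true
  | RInf, RFin _ => false
  end.

Inductive eint : Type := EMInf | EFin of int | EPInf.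
Definition ele (a b : eint) : bool :=
  match a, b with
  | EMInf, _ => true
  | _, EPInf => true
  | EFin x, EFin y => (x <= y)%R
  | EFin _, EMInf => false
  | EPInf, _ => false
  end.

(* H i j n : degree-n part of H(i,j) (only meaningful for i <= j).
   eta i j i' j' n : H(i,j)_n -> H(i',j')_n   (internal degree 0)
   del i j k n     : H(j,k)_{n+1} -> H(i,j)_n (internal degree -1) *)
Record ISystem (R : nzRingType) (I : Type) (le : rel I) := {
  H : I -> I -> int -> lmodType R;
  eta : forall (i j i' j' : I) (n : int), {linear H i j n -> H i' j' n};
  del : forall (i j k : I) (n : int), {linear H j k (n + 1) -> H i j n};
  eta_id : forall i j n (x : H i j n), le i j -> eta i j i j n x = x;
  eta_comp : forall i j i' j' i'' j'' n (x : H i j n),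
    le i j -> le i' j' -> le i'' j'' ->
    le i i' -> le i' i'' -> le j j' -> le j' j'' ->
    eta i' j' i'' j'' n (eta i j i' j' n x) = eta i j i'' j'' n x;
  del_natural : forall i j k i' j' k' n (x : H j k (n + 1)),
    le i j -> le j k -> le i' j' -> le j' k' ->
    le i i' -> le j j' -> le k k' ->
    eta i j i' j' n (del i j k n x) = del i' j' k' n (eta j k j' k' (n + 1) x);
  exact_ik : forall i j k n (y : H i k n), le i j -> le j k ->
    (eta i k j k n y = 0 <-> exists x : H i j n, eta i j i k n x = y);
  exact_jk : forall i j k n (y : H j k (n + 1)), le i j -> le j k ->
    (del i j k n y = 0 <-> exists x : H i k (n + 1), eta i k j k (n + 1) x = y);
  exact_ij : forall i j k n (y : H i j n), le i j -> le j k ->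
    (eta i j i k n y = 0 <-> exists x : H j k (n + 1), del i j k n x = y)
}.

Definition RightCESystem (R : nzRingType) := ISystem R rle.
Definition ExtendedCESystem (R : nzRingType) := ISystem R ele.

(* colim_s H(s,oo) = 0 (colimit over s in Z along eta), degreewise,
   using the standard description of a sequential colimit of modules. *)
Definition cond_conv_limit (R : nzRingType) (I : Type) (le : rel I)
    (fin : int -> I) (top : I) (S : ISystem R le) : Prop :=
  forall (n s : int) (x : H S (fin s) top n),
    exists t : int, (s <= t)%R /\ eta S (fin s) top (fin t) top n x = 0.

(* The canonical map colim_{j in Z, j -> oo} H(i,j) -> H(i,oo) induced by eta
   is an isomorphism (injective and surjective, degreewise). *)
Definition colim_map_iso (R : nzRingType) (I : Type) (le : rel I)
    (fin : int -> I) (top : I) (S : ISystem R le) (i : I) : Prop :=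
  forall n : int,
    (forall (j : int) (x : H S i (fin j) n), le i (fin j) ->
       eta S i (fin j) i top n x = 0 ->
       exists j' : int, (j <= j')%R /\ eta S i (fin j) i (fin j') n x = 0) /\
    (forall y : H S i top n,
       exists j : int, le i (fin j) /\
         exists x : H S i (fin j) n, eta S i (fin j) i top n x = y).

(* Main.v *)
Require Import Defs.
From HB Require Import structures.
From mathcomp Require Import all_boot all_order all_algebra.
Set Implicit Arguments. Unset Strict Implicit. Unset Printing Implicit Defensive.
Import Order.TTheory GRing.Theory Num.Theory.
Local Open Scope ring_scope.

Lemma Hjj0 (R : nzRingType) (I : Type) (le : rel I) (S : ISystem R le)
  j n (y : H S j j n) : le j j -> y = 0.
Proof.
move=> hj; rewrite -(@eta_id _ _ _ S j j n y hj).
apply/(@exact_ik _ _ _ S j j j n y hj hj).2.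
by exists y; rewrite eta_id.
Qed.

Lemma conv_iso (R : nzRingType) (I : Type) (le : rel I) (fin : int -> I)
  (top : I) (S : ISystem R le)
  (le_refl : forall x, le x x)
  (le_tr : forall a b c, le a b -> le b c -> le a c)
  (le_fin : forall a b, le (fin a) (fin b) = (a <= b))
  (le_top : forall x, le x top)
  i (hi : exists m, le i (fin m)) :
  cond_conv_limit fin top S -> colim_map_iso fin top S i.
Proof.
move=> cc n; split.
- move=> j x hij hx.
  have [w hw] := (@exact_ij _ _ _ S i (fin j) top n x hij (le_top _)).1 hx.
  have [t [hjt ht]] := cc (n+1) j w.
  exists t; split => //.
  have hit : le i (fin t) by apply: (le_tr _ _ _ hij); rewrite le_fin.
  rewrite -hw (@del_natural _ _ _ S i (fin j) top i (fin t) top n w)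
    ?ht ?raddf0 ?le_fin //.
- move=> y; case: hi => s hs.
  have [t [hst ht]] := cc n s (Defs.eta S i top (fin s) top n y).
  have hit : le i (fin t) by apply: (le_tr _ _ _ hs); rewrite le_fin.
  have hk : Defs.eta S i top (fin t) top n y = 0.
    by rewrite -ht (@eta_comp _ _ _ S i top (fin s) top (fin t) top n y)
      ?le_fin.
  have [x hx] := (@exact_ik _ _ _ S i (fin t) top n y hit (le_top _)).1 hk.
  by exists t; split => //; exists x.
Qed.

Lemma iso_conv (R : nzRingType) (I : Type) (le : rel I) (fin : int -> I)
  (top : I) (S : ISystem R le)
  (le_refl : forall x, le x x)
  (le_tr : forall a b c, le a b -> le b c -> le a c)
  (le_fin : forall a b, le (fin a) (fin b) = (a <= b))
  (le_top : forall x, le x top)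
  i (hi : forall s, exists m, s <= m /\ le i (fin m)) :
  colim_map_iso fin top S i -> cond_conv_limit fin top S.
Proof.
move=> iso.
suff key : forall m s (x : H S (fin s) top (m+1)), le i (fin s) ->
    exists t, s <= t /\ Defs.eta S (fin s) top (fin t) top (m+1) x = 0.
  move=> n s; have e : n = (n-1)+1 by rewrite subrK.
  rewrite e => x.
  have [m [hsm him]] := hi s.
  have [t [hmt ht]] := key _ m (Defs.eta S (fin s) top (fin m) top _ x) him.
  exists t; split; first exact: le_trans hmt.
  by rewrite -(@eta_comp _ _ _ S (fin s) top (fin m) top (fin t) top _ x)
    ?le_fin.
move=> m s x his.
set d := del S i (fin s) top m x.
have hd : Defs.eta S i (fin s) i top m d = 0.
  by apply/(@exact_ij _ _ _ S i (fin s) top m d his (le_top _)); exists x.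
have [j' [hsj hj']] := (iso m).1 s d his hd.
have hij' : le i (fin j') by apply: (le_tr _ _ _ his); rewrite le_fin.
set x' := Defs.eta S (fin s) top (fin j') top (m+1) x.
have hx' : del S i (fin j') top m x' = 0.
  by rewrite /x' -(@del_natural _ _ _ S i (fin s) top i (fin j') top m x)
    ?le_fin.
have [w hw] := (@exact_jk _ _ _ S i (fin j') top m x' hij' (le_top _)).1 hx'.
have [j [hij [u hu]]] := (iso (m+1)).2 w.
exists (Num.max j j'); split.
  by apply: (le_trans hsj); rewrite le_max lexx orbT.
have hjt : j <= Num.max j j' by rewrite le_max lexx.
have hj't : j' <= Num.max j j' by rewrite le_max lexx orbT.
set t := Num.max j j' in hjt hj't *.
have hit : le i (fin t) by apply: (le_tr _ _ _ hij); rewrite le_fin.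
rewrite -(@eta_comp _ _ _ S (fin s) top (fin j') top (fin t) top _ x) ?le_fin //.
rewrite -/x' -hw (@eta_comp _ _ _ S i top (fin j') top (fin t) top _ w) ?le_fin //.
rewrite -hu (@eta_comp _ _ _ S i (fin j) i top (fin t) top _ u) ?le_fin //.
rewrite -(@eta_comp _ _ _ S i (fin j) (fin j) (fin j) (fin t) top _ u) ?le_fin //.
by rewrite (@Hjj0 _ _ _ S (fin j) _ (Defs.eta S i (fin j) (fin j) (fin j) _ u))
  ?raddf0.
Qed.

Lemma rle_refl x : rle x x. Proof. by case: x => //= a; rewrite lexx. Qed.
Lemma rle_tr a b c : rle a b -> rle b c -> rle a c.
Proof. by case: a; case: b; case: c => //= x y z; apply: le_trans. Qed.
Lemma ele_refl x : ele x x. Proof. by case: x => //= a; rewrite lexx. Qed.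
Lemma ele_tr a b c : ele a b -> ele b c -> ele a c.
Proof. by case: a; case: b; case: c => //= x y z; apply: le_trans. Qed.

Theorem proposition6p4 :
  (forall (R : nzRingType) (S : RightCESystem R),
     (cond_conv_limit RFin RInf S <->
        exists i : int, colim_map_iso RFin RInf S (RFin i)) /\
     (cond_conv_limit RFin RInf S ->
        forall i : int, colim_map_iso RFin RInf S (RFin i))) /\
  (forall (R : nzRingType) (S : ExtendedCESystem R),
     (cond_conv_limit EFin EPInf S <->
        exists i : eint, i <> EPInf /\ colim_map_iso EFin EPInf S i) /\
     (cond_conv_limit EFin EPInf S ->
        forall i : eint, i <> EPInf -> colim_map_iso EFin EPInf S i)).
Proof.
split=> R S.
- have A : cond_conv_limit RFin RInf S ->
      forall i : int, colim_map_iso RFin RInf S (RFin i).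
    move=> cc i; apply: (conv_iso rle_refl rle_tr) => //; first by case.
    by exists i; rewrite /= lexx.
  split=> //; split; first by move=> cc; exists 0; apply: A.
  case=> i hi; apply: (iso_conv rle_refl rle_tr _ _ _ hi) => //; first by case.
  move=> s; exists (Num.max s i); rewrite /= !le_max !lexx orbT //.
- have A : cond_conv_limit EFin EPInf S ->
      forall i : eint, i <> EPInf -> colim_map_iso EFin EPInf S i.
    move=> cc i hi; apply: (conv_iso ele_refl ele_tr) => //; first by case.
    by case: i hi => [|a|] // _; [exists 0 | exists a; rewrite /= lexx].
  split=> //; split; first by move=> cc; exists (EFin 0); split => //; apply: A.
  case=> i [hi1 hi]; apply: (iso_conv ele_refl ele_tr _ _ _ hi) => //;
    first by case.
  move=> s; case: i hi1 hi => [|a|] // _ _.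
  + by exists s; rewrite lexx.
  + exists (Num.max s a); rewrite /= !le_max !lexx orbT //.
Qed.
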